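(* Let $d\ge2$ and $\overrightarrow{w}\in(0,\infty)^d$ with $w_1=\max\{w_1,\dots,w_d\}$ and $2w_1>\sum_{i=1}^dw_i$. Then for every random vector $\overrightarrow{U}=(U_1,\dots,U_d)$ with uniform$[0,1]$ marginals, $$l(\overrightarrow{w})\le\mathrm{Var}\left(\sum_{i=1}^dw_iU_i\right),$$ with equality if and only if $\overrightarrow{U}$ is $\overrightarrow{w^*}$-CM. Moreover, there exists such a $\overrightarrow{U}$ attaining equality.
   Context: A random vector $\overrightarrow{U}=(U_1,\dots,U_d)$ with each $U_i$ uniform on $[0,1]$ is $\overrightarrow{v}$-CM (for $\overrightarrow{v}\in(0,\infty)^d$) if $P\left(\sum_{i=1}^d v_iU_i=\frac12\sum_{i=1}^d v_i\right)=1$. For $\overrightarrow{w}\in(0,\infty)^d$, define $\overrightarrow{w^*}=(w_1^*,\dots,w_d^* )$ by $w_i^*=w_i$ if $2w_i\le\sum_{j=1}^dw_j$ and $w_i^*=\sum_{j=1}^dw_j-w_i$ if $2w_i>\sum_{j=1}^dw_j$; and define $l(\overrightarrow{w})=\frac1{12}\left[\left(2\max\{w_1,\dots,w_d\}-\sum_{i=1}^dw_i\right)_+\right]^2$, where $x_+=\max\{x,0\}$. *)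

(* Defs.v *)
From HB Require Import structures.
From mathcomp Require Import all_boot all_order all_algebra.
From mathcomp Require Import all_classical all_reals all_analysis.
Set Implicit Arguments. Unset Strict Implicit. Unset Printing Implicit Defensive.
Import Order.TTheory GRing.Theory Num.Theory.
Local Open Scope ring_scope.
Local Open Scope classical_set_scope.

Definition wsum (R : realType) (d : nat) (w : 'I_d -> R) : R := \sum_(i < d) w i.

(* max{w_1,...,w_d}; for d >= 1 and positive weights this is the maximum
   (0 is a neutral starting value since all weights are positive) *)
Definition wmax (R : realType) (d : nat) (w : 'I_d -> R) : R :=
  \big[Num.max/0]_(i < d) w i.

Definition wstar (R : realType) (d : nat) (w : 'I_d -> R) : 'I_d -> R :=
  fun i => if 2 * w i <= wsum w then w i else wsum w - w i.

Definition lw (R : realType) (d : nat) (w : 'I_d -> R) : R :=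
  12^-1 * (Num.max (2 * wmax w - wsum w) 0) ^+ 2.

Definition uniform01_marginal (dT : measure_display) (T : measurableType dT)
    (R : realType) (P : probability T R) (X : {RV P >-> R}) : Prop :=
  forall A : set R, measurable A ->
    distribution P X A = uniform_prob (@ltr01 R) A.

Definition wcomb (dT : measure_display) (T : measurableType dT)
    (R : realType) (P : probability T R) (d : nat)
    (v : 'I_d -> R) (U : 'I_d -> {RV P >-> R}) : T -> R :=
  fun t => \sum_(i < d) v i * U i t.

Definition is_CM (dT : measure_display) (T : measurableType dT)
    (R : realType) (P : probability T R) (d : nat)
    (v : 'I_d -> R) (U : 'I_d -> {RV P >-> R}) : Prop :=
  P [set t | wcomb v U t = 2^-1 * wsum v] = 1%E.

(* Main.v *)
Require Import Defs.
From HB Require Import structures.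
From mathcomp Require Import all_boot all_order all_algebra.
From mathcomp Require Import all_classical all_reals all_analysis.
From mathcomp Require Import ess_sup_inf measurable_realfun.
From mathcomp Require Import ring lra.
Import Order.TTheory GRing.Theory Num.Theory.
Import numFieldNormedType.Exports.
Local Open Scope ring_scope.
Local Open Scope classical_set_scope.
Set Implicit Arguments. Unset Strict Implicit.

Definition hm (R : realType) (n : nat) : R -> R := @XMonemX R n 0 \_ `[0%R, 1%R].
Arguments hm {R}.

Section uniform_facts.
Context dT (T : measurableType dT) (R : realType) (P : probability T R)
  (X : {RV P >-> R}) (hX : uniform01_marginal X).

Lemma uniform_out : uniform_prob (@ltr01 R) (~` `[0%R, 1%R]) = 0%E.
Proof. by rewrite /uniform_prob integral_uniform_pdf setICl integral_set0. Qed.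

Lemma ae01 : \forall t \ae P, 0 <= X t <= 1.
Proof.
exists (X @^-1` (~` `[0%R, 1%R])); split.
- by apply: measurable_funPTI; apply: measurableC.
- have m01 : measurable (`[0%R, 1%R] : set R) by exact: measurable_itv.
  have := hX (measurableC m01).
  by rewrite uniform_out.
- by move=> t /= H; apply: contra_not H => /=; rewrite in_itv.
Qed.

Lemma LfunX_oo : (X : T -> R) \in Lfun P +oo%E.
Proof.
rewrite inE; apply/andP; split; first by rewrite inE; exact: measurable_funP.
rewrite inE /= /finite_norm unlock /Lnorm.
case: ifPn => // _.
apply: (@le_lt_trans _ _ 1%:E); last exact: ltry.
apply/ess_supP; apply: filterS (ae01) => t /andP[t0 t1] /=.
by rewrite lee_fin ger0_norm.
Qed.

Lemma LfunX2 : (X : T -> R) \in Lfun P 2%:E.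
Proof.
apply: (@Lfun_subset _ _ _ P 2%:E +oo%E) => //; last exact: LfunX_oo.
- by rewrite lee1n.
- by rewrite leey.
- exact: (fin_num_measure P _ measurableT).
- by rewrite leey.
Qed.


Lemma hm_ge0 n (x : R) : 0 <= hm n x.
Proof.
rewrite /hm patchE; case: ifPn => // x01.
by apply: XMonemX_ge0; move: x01; rewrite inE.
Qed.

Lemma measurable_hm n : measurable_fun [set: R] (hm n).
Proof.
rewrite /hm.
have m01 : measurable (`[0%R, 1%R] : set R) by exact: measurable_itv.
by apply/(measurable_restrictT _ m01); exact: measurable_XMonemX.
Qed.

Lemma momentX n : (\int[P]_t ((X t) ^+ n)%:E = (n.+1%:R^-1)%:E)%E.
Proof.
have mhm : measurable_fun [set: R] (EFin \o hm n).
  by apply/measurable_EFinP; exact: measurable_hm.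
transitivity (\int[P]_t (hm n (X t))%:E)%E.
  apply: ae_eq_integral => //.
  - by apply/measurable_EFinP; apply: measurable_funX.
  - by apply: measurableT_comp => //; apply: measurableT_comp => //; exact: measurable_hm.
  - apply: filterS (ae01) => t /andP[t0 t1] _.
    rewrite /hm patchE ifT; last by apply/mem_set; rewrite /= in_itv /= t0 t1.
    by rewrite XMonemXn0.
pose phi : T -> measurableTypeR R := fun t => X t.
have mphi : measurable_fun [set: T] phi.
  move=> _ Y mY; have H := (measurable_funP X measurableT); exact: (H Y mY).
transitivity (\int[pushforward P phi]_y (hm n y)%:E)%E.
  rewrite ge0_integral_pushforward //=.
  - by move=> y _; rewrite lee_fin hm_ge0.
transitivity (\int[uniform_prob (@ltr01 R)]_y (hm n y)%:E)%E.
  apply: eq_measure_integral => A mA _; exact: hX A mA.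
rewrite integral_uniform //; last by move=> y; rewrite lee_fin hm_ge0.
rewrite subr0 invr1 mul1e integral_mkcond.
transitivity ((@beta_fun R n.+1 1)%:E); last first.
  rewrite beta_fun_fact addn0 fact0 muln1 factS natrM; congr EFin.
  have h : (n`!%:R : R) != 0 by rewrite pnatr_eq0 -lt0n fact_gt0.
  by rewrite invfM mulrCA divff // mulr1.
rewrite EFin_beta_fun; apply: eq_integral => x _ /=.
by rewrite /hm !patchE; case: ifPn => // ->.
Qed.

Lemma EX : ('E_P[X] = (2^-1)%:E)%E.
Proof.
rewrite expectation_def -(momentX 1).
by apply: eq_integral => t _; rewrite expr1.
Qed.

Lemma EX2 : ('E_P[X ^+ 2] = (3^-1)%:E)%E.
Proof.
rewrite unlock -(momentX 2).
by apply: eq_integral => t _.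
Qed.

Lemma VX : ('V_P[X] = (12^-1)%:E)%E.
Proof.
rewrite varianceE ?LfunX2 // EX2 EX -EFin_expe -EFinB; congr EFin.
by field.
Qed.
End uniform_facts.


Section sums.
Context dT (T : measurableType dT) (R : realType) (P : probability T R).

Lemma sum_lemma (I : Type) (r : seq I) (F : I -> T -> R) (Y : T -> R) :
  Y \in Lfun P 2%:E -> (forall j, F j \in Lfun P 2%:E) ->
  (fun t => \sum_(j <- r) F j t) \in Lfun P 2%:E /\
  ('E_P[(fun t => \sum_(j <- r) F j t)%R] = \sum_(j <- r) 'E_P[F j])%E /\
   (covariance P Y (fun t => \sum_(j <- r) F j t)%R = \sum_(j <- r) covariance P Y (F j))%E.
Proof.
move=> hY hF.
have Pfin : P setT \is a fin_num := fin_num_measure P _ measurableT.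
elim: r => [|j r [IH1 [IH2 IH3]]].
  have -> : (fun t => \sum_(j <- [::]) F j t) = cst 0.
    by apply/funext => t; rewrite big_nil.
  by rewrite !big_nil Lfun_cst expectation_cst covariance_cst_r.
have -> : (fun t => \sum_(k <- j :: r) F k t) = (F j \+ (fun t => \sum_(k <- r) F k t))%R.
  by apply/funext => t; rewrite big_cons.
rewrite !big_cons; split.
  by have := rpredD (hF j) IH1; apply; rewrite lee1n.
split.
  by rewrite expectationD ?IH2 //; apply: Lfun_subset12.
by rewrite covarianceDr ?IH3.
Qed.

Lemma var0_iff (Z : T -> R) (m : R) : Z \in Lfun P 2%:E ->
  ('E_P[Z] = m%:E)%E -> ('V_P[Z] = 0%E <-> P [set t | Z t = m] = 1%E).
Proof.
move=> hZ EZ.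
have mZ : measurable_fun [set: T] Z.
  by move: hZ; rewrite inE => /andP[]; rewrite inE.
have mS : measurable [set t | Z t = m].
  by rewrite -[X in measurable X]setTI; exact: (mZ measurableT _ (measurable_set1 m)).
rewrite /variance unlock EZ /= unlock.
have mg : measurable_fun [set: T] (fun w => (((Z \- cst m) * (Z \- cst m)) w)%:E).
  apply/measurable_EFinP => /=; apply: measurable_funM; apply: measurable_funB => //.
have mSC : measurable (~` [set t | Z t = m]) by exact: measurableC.
have key : P [set t | Z t = m] = 1%E <-> P (~` [set t | Z t = m]) = 0%E.
  rewrite probability_setC //; split => [->|]; first by rewrite subee.
  rewrite -(fineK (fin_num_measure P _ mS)) -EFinB => /eqP.
  by rewrite eqe subr_eq0 => /eqP <-.
rewrite key; split.
- move=> H.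
  have : (\int[P]_(x in [set: T]) `|(((Z \- cst m) * (Z \- cst m)) x)%:E| = 0)%E.
    rewrite -H; apply: eq_integral => x _ /=.
    by rewrite ger0_norm // -expr2 sqr_ge0.
  move/(ae_eq_integral_abs _ measurableT mg) => [N [mN PN sub]].
  apply: (subset_measure0 (B := N)) => // t /= Zt; apply: sub => /=.
  move=> /(_ I) /eqP; rewrite eqe /= mulf_eq0 orbb subr_eq0.
  by move/eqP.
- move=> H.
  rewrite (ae_eq_integral (cst 0%E)) //.
  + by rewrite integral0.
  + exists (~` [set t | Z t = m]); split => // t /= Ht Zt; apply: Ht => _ /=.
    have -> : (((Z \- cst m) * (Z \- cst m)) t) = (Z t - m) * (Z t - m) by [].
    by rewrite Zt subrr mulr0.
Qed.
End sums.


Section weights.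
Context (R : realType) (d : nat) (w : 'I_d -> R) (i0 : 'I_d)
  (hpos : forall i, 0 < w i) (hi0 : forall i, w i <= w i0)
  (hbig0 : 2 * w i0 > wsum w).

Lemma W1 : wsum w = w i0 + \sum_(j < d | j != i0) w j.
Proof. by rewrite /wsum (bigD1 i0). Qed.

Lemma W2 j : j != i0 -> w i0 + w j <= wsum w.
Proof.
move=> ji; rewrite W1 lerD2l (bigD1 j) //= lerDl.
by apply: sumr_ge0 => k _; exact: ltW.
Qed.

Lemma W3 : wstar w i0 = wsum w - w i0.
Proof. by rewrite /wstar ifN // -ltNge. Qed.

Lemma W4 j : j != i0 -> wstar w j = w j.
Proof.
move=> ji; rewrite /wstar ifT //.
by apply: le_trans (W2 ji); rewrite mulr2n mulrDl mul1r lerD2r.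
Qed.

Lemma W5 : wsum (wstar w) = 2 * (wsum w - w i0).
Proof.
rewrite {1}/wsum (bigD1 i0) //= W3.
rewrite (eq_bigr w); last by move=> j; exact: W4.
have := W1; lra.
Qed.

Lemma W6 : wmax w = w i0.
Proof.
apply/le_anti/andP; split.
  rewrite /wmax; elim/big_ind: _ => //.
  - exact: ltW.
  - by move=> x y hx hy; rewrite ge_max hx hy.
rewrite /wmax (bigD1 i0) //= le_max lexx //.
Qed.

Lemma W7 : lw w = 12^-1 * (2 * w i0 - wsum w) ^+ 2.
Proof. by rewrite /lw W6 max_l // ltW // subr_gt0. Qed.

Lemma W8 (x : 'I_d -> R) :
  \sum_(i < d) w i * x i = (2 * w i0 - wsum w) * x i0 + \sum_(i < d) wstar w i * x i.
Proof.
rewrite (bigD1 i0) //= [X in _ = _ + X](bigD1 i0) //= W3.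
rewrite [X in _ = _ + (_ + X)](eq_bigr (fun i => w i * x i)); last first.
  by move=> j ji; rewrite W4.
ring.
Qed.
End weights.


Lemma part1 (R : realType) (d : nat) (w : 'I_d -> R) (i0 : 'I_d)
  (hpos : forall i, 0 < w i) (hi0 : forall i, w i <= w i0)
  (hbig0 : 2 * w i0 > wsum w)
  (dT : measure_display) (T : measurableType dT)
  (P : probability T R) (U : 'I_d -> {RV P >-> R}) :
  (forall i, uniform01_marginal (U i)) ->
  ((lw w)%:E <= 'V_P[wcomb w U])%E /\
  ((lw w)%:E = 'V_P[wcomb w U] <-> is_CM (wstar w) U).
Proof.
move=> hU.
set c := 2 * w i0 - wsum w.
have c0 : 0 < c by rewrite subr_gt0.
have Pfin : P setT \is a fin_num := fin_num_measure P _ measurableT.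
have L2 i : (U i : T -> R) \in Lfun P 2%:E := LfunX2 (hU i).
have L1 i := Lfun_subset12 Pfin (L2 i).
pose F j := (wstar w j \o* (U j : T -> R)).
have LF j : F j \in Lfun P 2%:E by apply: Lfun_scale => //; rewrite ler1n.
have [LZ [EZ CZ]] := sum_lemma (index_enum 'I_d) (L2 i0) LF.
set Z := (fun t => \sum_(j <- index_enum 'I_d) F j t) in LZ EZ CZ.
have XE : (wcomb w U = (c \o* (U i0 : T -> R)) \+ Z)%R.
  apply/funext => t; rewrite /wcomb (W8 hpos hi0 hbig0) /Z /F /=.
  by congr (_ + _); [rewrite mulrC | apply: eq_bigr => i _; rewrite mulrC].
have VU i : ('V_P[U i] = (12^-1)%:E)%E := VX (hU i).
have EU i : ('E_P[U i] = (2^-1)%:E)%E := EX (hU i).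
have L11 i j : ((U i : T -> R) * (U j : T -> R))%R \in Lfun P 1 :=
  Lfun2_mul_Lfun1 (L2 i) (L2 j).
pose C j := fine (covariance P (U i0) (U j)).
have CE j : covariance P (U i0) (U j) = (C j)%:E.
  by rewrite /C fineK // covariance_fin_num.
have Ci0 : C i0 = 12^-1.
  by rewrite /C; have := VU i0; rewrite /variance => ->.
have Cge j : - 12^-1 <= C j.
  have := variance_ge0 P ((U i0 : T -> R) \+ (U j : T -> R))%R.
  rewrite varianceD // !VU CE -EFinM -!EFinD lee_fin.
  lra.
have ZW : Z = wcomb (wstar w) U.
  by apply/funext => t; rewrite /Z /F /wcomb; apply: eq_bigr => i _ /=; rewrite mulrC.
have EZv : ('E_P[Z] = (2^-1 * wsum (wstar w))%:E)%E.
  rewrite EZ (eq_bigr (fun j => (wstar w j * 2^-1)%:E)); last first.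
    by move=> j _; rewrite /F expectationZl // EU -EFinM.
  by rewrite sumEFin /wsum mulr_sumr; congr EFin; apply: eq_bigr => j _; rewrite mulrC.
set K := \sum_(j <- index_enum 'I_d) wstar w j * C j.
have CZv : covariance P (U i0) Z = K%:E.
  rewrite CZ /K -sumEFin; apply: eq_bigr => j _.
  by rewrite /F covarianceZr // CE -EFinM.
have K0 : 0 <= K.
  rewrite /K (bigD1 i0) //= (W3 hbig0) Ci0.
  rewrite (eq_bigr (fun j => w j * C j)); last by move=> j ji; rewrite (W4 hpos hi0 ji).
  have H1 : \sum_(j < d | j != i0) w j * (- 12^-1) <= \sum_(j < d | j != i0) w j * C j.
    by apply: ler_sum => j _; apply: ler_wpM2l; [exact: ltW | exact: Cge].
  rewrite -mulr_suml in H1.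
  have := W1 w i0.
  set S' := \sum_(j < d | j != i0) w j in H1 *.
  set S'' := \sum_(j < d | j != i0) w j * C j in H1 *.
  lra.
have LZ1 := Lfun_subset12 Pfin LZ.
have LZm : ((U i0 : T -> R) * Z)%R \in Lfun P 1 := Lfun2_mul_Lfun1 (L2 i0) LZ.
have VZf := variance_fin_num LZ.
set vz := fine 'V_P[Z].
have VZE : 'V_P[Z] = vz%:E by rewrite /vz fineK.
have vz0 : 0 <= vz by rewrite -lee_fin -VZE variance_ge0.
have cK : 0 <= c * K by rewrite mulr_ge0 // ltW.
have VXE : 'V_P[wcomb w U] = (c ^+ 2 * 12^-1 + vz + 2 * (c * K))%:E.
  rewrite XE varianceD //; last by apply: Lfun_scale => //; rewrite ler1n.
  rewrite varianceZ // VU covarianceZl // CZv VZE.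
  by rewrite -!EFinM -!EFinD.
rewrite VXE (W7 hpos hi0 hbig0) -/c lee_fin; split; first lra.
have LW : wcomb (wstar w) U \in Lfun P 2%:E by rewrite -ZW.
have EW : ('E_P[wcomb (wstar w) U] = (2^-1 * wsum (wstar w))%:E)%E by rewrite -ZW.
have VW : 'V_P[wcomb (wstar w) U] = vz%:E by rewrite -ZW.
have := var0_iff LW EW; rewrite /is_CM => <-; rewrite VW.
split.
- case=> H; have -> : vz = 0 by lra.
  by [].
- move=> vz00; have vz00' : vz = 0 by case: vz00.
  have : (covariance P (U i0) Z <= sqrte 'V_P[U i0] * sqrte 'V_P[Z])%E.
    exact: covariance_le.
  rewrite CZv VZE vz00' sqrte0 mule0 lee_fin => K0'.
  congr EFin; have -> : K = 0 by lra.
  rewrite mulr0 mulr0 addr0 addr0; lra.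
Qed.


Definition onemR (R : realType) : measurableTypeR R -> measurableTypeR R :=
  fun x => 1 - x.

Lemma measurable_onemR (R : realType) : measurable_fun [set: measurableTypeR R] (@onemR R).
Proof.
apply: measurable_funB => //.
Qed.

Lemma lebesgue_onem (R : realType) (A : set R) : measurable A ->
  pushforward lebesgue_measure (@onemR R) A = lebesgue_measure A.
Proof.
have mphi := @measurable_onemR R.
move=> mA; apply/esym/lebesgue_measure_unique => //= _ [[a b]] _ <-.
rewrite /pushforward.
have -> : @onemR R @^-1` `]a, b] = `[1 - b, 1 - a[.
  apply/seteqP; split => x /=; rewrite /onemR !in_itv /=.
  - by move=> /andP[h1 h2]; apply/andP; split; lra.
  - by move=> /andP[h1 h2]; apply/andP; split; lra.
rewrite !lebesgue_measure_itv /= !lte_fin.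
have -> : (1 - b < 1 - a) = (a < b) by rewrite ltrD2l ltrN2.
by case: ifP => // _; rewrite -!EFinD; congr EFin; ring.
Qed.

Lemma uniform_onem (R : realType) (A : set R) : measurable A ->
  uniform_prob (@ltr01 R) (@onemR R @^-1` A) = uniform_prob (@ltr01 R) A.
Proof.
move=> mA; have mphi := @measurable_onemR R.
rewrite /uniform_prob.
transitivity (\int[lebesgue_measure]_(x in @onemR R @^-1` A)
   ((fun y => (uniform_pdf 0 1 y)%:E) \o @onemR R) x)%E.
  apply: eq_integral => x _ /=; congr EFin; rewrite /uniform_pdf /onemR.
  have -> : (0 <= 1 - x <= 1) = (0 <= x <= 1) :> bool.
    by apply/idP/idP => /andP[h1 h2]; apply/andP; split; lra.
  by [].
rewrite -ge0_integral_pushforward //.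
- apply: eq_measure_integral => B mB _; exact: lebesgue_onem.
- apply/measurable_EFinP; apply: measurable_funTS; exact: measurable_uniform_pdf.
- by move=> y _; rewrite lee_fin uniform_pdf_ge0.
Qed.

Definition ridR (R : realType) : measurableTypeR R -> R := fun x => x.
Definition ronemR (R : realType) : measurableTypeR R -> R := fun x => 1 - x.

Lemma measurable_ridR (R : realType) : measurable_fun [set: measurableTypeR R] (@ridR R).
Proof. by move=> _ Y mY; rewrite setTI. Qed.

Lemma measurable_ronemR (R : realType) : measurable_fun [set: measurableTypeR R] (@ronemR R).
Proof. by apply: measurable_funB => //; exact: measurable_ridR. Qed.

HB.instance Definition _ (R : realType) :=
  isMeasurableFun.Build _ _ _ _ (@ridR R) (@measurable_ridR R).
HB.instance Definition _ (R : realType) :=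
  isMeasurableFun.Build _ _ _ _ (@ronemR R) (@measurable_ronemR R).

Section ex.
Context (R : realType) (d : nat).
Let PU : probability (measurableTypeR R) R := uniform_prob (@ltr01 R).

Definition Uex : 'I_d -> {RV PU >-> R} := fun i =>
  if nat_of_ord i == 0%N then [the {mfun measurableTypeR R >-> R} of @ridR R]
  else [the {mfun measurableTypeR R >-> R} of @ronemR R].

Lemma Uex_marg i : uniform01_marginal (Uex i).
Proof.
move=> A mA; rewrite /Uex; case: ifP => _ /=.
- by [].
- exact: uniform_onem.
Qed.
End ex.


Theorem mainTheorem10 (R : realType) (d : nat) (w : 'I_d -> R)
  (hd : (2 <= d)%N)
  (hpos : forall i, 0 < w i)
  (hmax : forall i j : 'I_d, nat_of_ord j = 0%N -> w i <= w j)
  (hbig : forall j : 'I_d, nat_of_ord j = 0%N -> 2 * w j > wsum w) :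
  (forall (dT : measure_display) (T : measurableType dT)
          (P : probability T R) (U : 'I_d -> {RV P >-> R}),
      (forall i, uniform01_marginal (U i)) ->
      ((lw w)%:E <= 'V_P[wcomb w U])%E /\
      ((lw w)%:E = 'V_P[wcomb w U] <-> is_CM (wstar w) U)) /\
  (exists (dT : measure_display) (T : measurableType dT)
          (P : probability T R) (U : 'I_d -> {RV P >-> R}),
      (forall i, uniform01_marginal (U i)) /\
      (lw w)%:E = 'V_P[wcomb w U]).
Proof.
have d0 : (0 < d)%N by apply: leq_trans hd.
pose i0 := Ordinal d0.
have hi0 i : w i <= w i0 by exact: hmax.
have hb0 : 2 * w i0 > wsum w by exact: hbig.
split.
  by move=> dT T P U hU; exact: (part1 hpos hi0 hb0 hU).
exists _, (measurableTypeR R), (uniform_prob (@ltr01 R)), (@Uex R d).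
split; first exact: Uex_marg.
have [_ H] := part1 hpos hi0 hb0 (@Uex_marg R d).
apply/H; rewrite /is_CM.
have -> : [set t : measurableTypeR R | wcomb (wstar w) (@Uex R d) t = 2^-1 * wsum (wstar w)] = [set: measurableTypeR R].
  apply/seteqP; split => // t _ /=.
  rewrite (W5 hpos hi0 hb0) /wcomb (bigD1 i0) //= (W3 hb0).
  rewrite (eq_bigr (fun j => w j * (1 - t))); last first.
    by move=> j ji; rewrite (W4 hpos hi0 ji) /Uex ifN //.
  rewrite -mulr_suml /ridR.
  have := W1 w i0; set S := \sum_(j < d | j != i0) w j.
  by move=> h; rewrite h; field.
by rewrite probability_setT.
Qed.
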